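(* Let $n\ge 2$ and consider the potential $V$ of the context with $\sigma=0$. There is a critical point $\mathbf a=(a_1,\dots,a_n)$ of $V$ on $\Omega$ (a symmetric collinear equilibrium) such that every $a_j$ lies on the real axis, $a_j=(p_j,0)$ with $p_j\in\mathbb R$, and $$p_1<p_2<\dots<p_n,\qquad p_{n+1-j}=-p_j\quad (j=1,\dots,n).$$
   Context: For $u=(u_1,\dots,u_n)\in(\mathbb R^2)^n$ let $$V(u)=\sum_{j=1}^{n-1}U(|u_{j+1}-u_j|^2)+\sum_{1\le j<k\le n}W(|u_j-u_k|^2),$$ where $U(x)=x-2x^{1/2}$ and $W\in C^2((0,\infty))$ satisfies $\lim_{x\to0}W(x)=\lim_{x\to0}(-W'(x))=+\infty$ and $\lim_{x\to\infty}W(x)=\lim_{x\to\infty}W'(x)=0$. $V$ is defined on $\Omega=\{u\in\mathbb R^{2n}:u_j\ne u_k\text{ for }j\ne k\}$; a critical point means $\nabla V(\mathbf a)=0$. *)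

(* Defs.v *)
From Stdlib Require Import Reals.
From Coquelicot Require Import Coquelicot.
Open Scope R_scope.

(* points of R^2 are pairs; a configuration u = (u_1,...,u_n) is encoded
   0-indexed as u : nat -> R * R, only u 0, ..., u (n-1) being relevant *)
Definition pt := (R * R)%type.

Definition dist2 (x y : pt) : R :=
  (fst x - fst y) ^ 2 + (snd x - snd y) ^ 2.

Fixpoint sumR (n : nat) (f : nat -> R) : R :=
  match n with
  | O => 0
  | S m => sumR m f + f m
  end.

Definition U (x : R) : R := x - 2 * sqrt x.

Definition V (W : R -> R) (n : nat) (u : nat -> pt) : R :=
  sumR (n - 1) (fun j => U (dist2 (u (S j)) (u j)))
  + sumR n (fun k => sumR k (fun j => W (dist2 (u j) (u k)))).

Definition in_Omega (n : nat) (u : nat -> pt) : Prop :=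
  forall j k : nat, (j < n)%nat -> (k < n)%nat -> j <> k -> u j <> u k.

Definition upd (u : nat -> pt) (j : nat) (x : pt) : nat -> pt :=
  fun i => if Nat.eqb i j then x else u i.

Definition critical_point (W : R -> R) (n : nat) (a : nat -> pt) : Prop :=
  forall j : nat, (j < n)%nat ->
    is_derive (fun t => V W n (upd a j (fst (a j) + t, snd (a j)))) 0 0 /\
    is_derive (fun t => V W n (upd a j (fst (a j), snd (a j) + t))) 0 0.

Definition C2_pos (W : R -> R) : Prop :=
  forall x : R, 0 < x ->
    ex_derive W x /\
    (exists eps : posreal, forall y, Rabs (y - x) < eps -> ex_derive W y) /\
    ex_derive (Derive W) x /\
    (exists eps : posreal, forall y, Rabs (y - x) < eps -> ex_derive (Derive W) y) /\
    continuous (Derive_n W 2) x.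

Definition W_hyp (W : R -> R) : Prop :=
  C2_pos W /\
  filterlim W (at_right 0) (Rbar_locally p_infty) /\
  filterlim (fun x => - Derive W x) (at_right 0) (Rbar_locally p_infty) /\
  is_lim W p_infty 0 /\
  is_lim (Derive W) p_infty 0.

(* Main.v *)
Require Import Defs.
From Stdlib Require Import Reals Lra Lia FunctionalExtensionality Classical.
From Coquelicot Require Import Coquelicot.
From mathcomp Require all_boot all_order all_algebra all_classical all_reals all_analysis Rstruct Rstruct_topology.
Open Scope R_scope.

Lemma sumR_ext n f g : (forall i, (i < n)%nat -> f i = g i) -> sumR n f = sumR n g.
Proof. induction n; simpl; intros H; auto. rewrite IHn by (intros; apply H; lia). rewrite H by lia; auto. Qed.

Lemma sumR_lin n k1 k2 f g : sumR n (fun i => k1 * f i + k2 * g i) = k1 * sumR n f + k2 * sumR n g.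
Proof. induction n; simpl; [ring|]. rewrite IHn; ring. Qed.

Lemma sumR_0 n f : (forall i, (i < n)%nat -> f i = 0) -> sumR n f = 0.
Proof. intros H; rewrite (sumR_ext n f (fun i => 0 * f i + 0 * f i)). rewrite sumR_lin; ring.
 intros; rewrite H; auto; ring. Qed.

Lemma sumR_shift n f : sumR (S n) f = f O + sumR n (fun i => f (S i)).
Proof. induction n; simpl in *; [ring|]. rewrite IHn; ring. Qed.

Lemma sumR_rev n f : sumR n f = sumR n (fun i => f (n - 1 - i)%nat).
Proof.
  induction n; auto. rewrite (sumR_shift n (fun i => f (S n - 1 - i)%nat)).
  change (sumR (S n) f) with (sumR n f + f n).
  rewrite IHn. replace (S n - 1 - 0)%nat with n by lia. rewrite Rplus_comm. f_equal.
  apply sumR_ext; intros; f_equal; lia.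
Qed.

Lemma sumR_ge n f c : (forall i, (i < n)%nat -> - c <= f i) -> - INR n * c <= sumR n f.
Proof. induction n; intros H; [simpl; lra|]. change (sumR (S n) f) with (sumR n f + f n). rewrite S_INR.
  assert (- INR n * c <= sumR n f) by (apply IHn; intros; apply H; lia).
  assert (- c <= f n) by (apply H; lia). lra. Qed.

Lemma sumR_ge_one n f c j0 T : (j0 < n)%nat -> 0 <= c -> T <= f j0 ->
  (forall i, (i < n)%nat -> i <> j0 -> - c <= f i) -> T - INR n * c <= sumR n f.
Proof. induction n; intros Hj Hc HT H; [lia|]. change (sumR (S n) f) with (sumR n f + f n). rewrite S_INR.
  destruct (Nat.eq_dec j0 n).
  - subst. assert (- INR n * c <= sumR n f) by (apply sumR_ge; intros; apply H; lia).
    lra.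
  - assert (T - INR n * c <= sumR n f) by (apply IHn; [lia|auto|auto|intros; apply H; lia]).
    assert (- c <= f n) by (apply H; lia). lra. Qed.

Lemma sumR_is_derive n (f : nat -> R -> R) (d : nat -> R) (x : R) :
  (forall i, (i < n)%nat -> is_derive (f i) x (d i)) ->
  is_derive (fun t => sumR n (fun i => f i t)) x (sumR n d).
Proof. induction n; simpl; intros H.
  - auto_derive; auto.
  - apply (is_derive_plus (fun t => sumR n (fun i => f i t)) (f n)).
    apply IHn; intros; apply H; lia. apply H; lia. Qed.

Definition DS n (h : nat -> nat -> R) := sumR n (fun k => sumR k (fun j => h j k)).

Lemma DS_swap n h : DS n h = sumR n (fun j => sumR (n - 1 - j) (fun i => h j (S j + i)%nat)).
Proof.
  unfold DS; induction n; auto.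
  change (sumR (S n) (fun k => sumR k (fun j => h j k))) with
   (sumR n (fun k => sumR k (fun j => h j k)) + sumR n (fun j => h j n)).
  rewrite IHn.
  change (sumR (S n) (fun j => sumR (S n - 1 - j) (fun i => h j (S j + i)%nat))) with
   (sumR n (fun j => sumR (S n - 1 - j) (fun i => h j (S j + i)%nat)) +
    sumR (S n - 1 - n) (fun i => h n (S n + i)%nat)).
  replace (S n - 1 - n)%nat with O by lia. simpl (sumR 0 _).
  rewrite Rplus_0_r.
  transitivity (sumR n (fun j => 1 * sumR (n - 1 - j) (fun i => h j (S j + i)%nat) + 1 * h j n)).
  { rewrite sumR_lin; ring. }
  apply sumR_ext; intros j Hj. replace (S n - 1 - j)%nat with (S (n - 1 - j)) by lia.
  simpl. replace (S (j + (n - 1 - j))) with n by lia. ring.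
Qed.

Lemma DS_rev n h : DS n h = DS n (fun j k => h (n - 1 - k)%nat (n - 1 - j)%nat).
Proof.
  rewrite DS_swap. unfold DS. rewrite (sumR_rev n (fun k => sumR k _)).
  apply sumR_ext; intros k Hk. replace (n - 1 - k)%nat with (n - 1 - k)%nat by lia.
  rewrite sumR_rev. apply sumR_ext; intros j Hj. f_equal; lia.
Qed.

Definition cont (m : nat) (f : (nat -> R) -> R) (x : nat -> R) : Prop :=
  forall eps, 0 < eps -> exists delta, 0 < delta /\ forall y,
    (forall i, (i < m)%nat -> Rabs (y i - x i) < delta) -> Rabs (f y - f x) < eps.

Definition clamp (lo hi x : R) := Rmax lo (Rmin hi x).
Lemma clamp_in lo hi x : lo <= hi -> lo <= clamp lo hi x <= hi.
Proof. intros; unfold clamp, Rmax, Rmin; repeat destruct Rle_dec; lra. Qed.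
Lemma clamp_id lo hi x : lo <= x <= hi -> clamp lo hi x = x.
Proof. intros; unfold clamp, Rmax, Rmin; repeat destruct Rle_dec; lra. Qed.
Lemma clamp_lip lo hi a b : lo <= hi -> Rabs (clamp lo hi a - clamp lo hi b) <= Rabs (a - b).
Proof. intros; unfold clamp, Rmax, Rmin, Rabs; repeat destruct Rle_dec; repeat destruct Rcase_abs; lra. Qed.
Lemma cont_ext m f y z : cont m f y -> (forall i, (i < m)%nat -> z i = y i) -> f z = f y.
Proof.
  intros Hc Hz. destruct (Req_dec (f z) (f y)) as [|Hne]; auto.
  assert (Hp : 0 < Rabs (f z - f y)) by (apply Rabs_pos_lt; lra).
  destruct (Hc _ Hp) as [d [d0 Hd]].
  assert (Rabs (f z - f y) < Rabs (f z - f y)); [|lra].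
  apply Hd; intros i Hi; rewrite Hz by auto; unfold Rminus; rewrite Rplus_opp_r, Rabs_R0; auto.
Qed.

Module Box.
Import all_boot all_order all_algebra all_classical all_reals all_analysis Rstruct Rstruct_topology.
Import Order.TTheory GRing.Theory Num.Theory.
Import numFieldNormedType.Exports.
Local Open Scope classical_set_scope.
Local Open Scope ring_scope.
Lemma bridge (m:nat) (g : 'rV[R]_m -> R) :
 (forall (v : 'rV[R]_m) (eps : R), 0 < eps -> exists2 d : R, 0 < d & forall w : 'rV[R]_m, (forall j, `|w ord0 j - v ord0 j| < d) -> `|g w - g v| < eps) -> continuous g.
Proof.
move=> H v A /nbhs_ballP [e e0 HA].
have [d d0 Hd] := H v e e0.
exists (fun i j => ball (v i j) d).
  move=> i j /=. exact: nbhsx_ballx.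
move=> w /= Hw. apply: HA.
rewrite /ball /= -normrN opprB. apply: Hd => j.
have := Hw ord0 j. by rewrite /ball /= -normrN opprB.
Qed.

Lemma box_min (m:nat) (lo hi : R) (f : (nat -> R) -> R) :
  Rle lo hi ->
  (forall x, (forall i, (i < m)%coq_nat -> Rle lo (x i) /\ Rle (x i) hi) -> cont m f x) ->
  exists x, (forall i, (i<m)%coq_nat -> Rle lo (x i) /\ Rle (x i) hi) /\
    (forall y, (forall i, (i<m)%coq_nat -> Rle lo (y i) /\ Rle (y i) hi) -> Rle (f x) (f y)).
Proof.
move=> Hlh Hc.
pose tf (v : 'rV[R]_m) : nat -> R := fun i => oapp (fun k : 'I_m => clamp lo hi (v ord0 k)) lo (insub i).
have tfin v i : Rle lo (tf v i) /\ Rle (tf v i) hi.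
  rewrite /tf; case: insubP => [u _ _|_] /=; first exact: clamp_in.
  split; [exact: Rle_refl | exact: Hlh].
pose g v := f (tf v).
have gc : continuous g.
  apply: bridge => v eps /RltP eps0.
  have [d [/RltP d0 Hd]] := Hc (tf v) (fun i _ => tfin v i) eps eps0.
  exists d => // w Hw; apply/RltP; apply: Hd => i Hi.
  rewrite /tf; case: insubP => [u _ _|_] /=.
    apply: Rle_lt_trans; first exact: clamp_lip.
    by apply/RltP; apply: Hw.
  by rewrite Rminus_diag Rabs_R0; apply/RltP.
pose A := [set v : 'rV[R]_m | forall i, `[lo, hi]%classic (v ord0 i)].
have cA : compact A by exact: (@rV_compact _ m (fun=> `[lo, hi]%classic) (fun=> @segment_compact _ lo hi)).
have A0 : A !=set0.
  exists (const_mx lo) => i /=; rewrite mxE in_itv /= lexx /=; exact/RleP.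
have [c cA' cmin] := EVT_min_rV A0 cA (continuous_subspaceT gc).
exists (tf c); split; first by move=> i _; exact: tfin.
move=> y Hy.
pose t : 'rV[R]_m := \row_(j < m) y (val j).
have tA : t \in A.
  rewrite inE => i; rewrite /= mxE in_itv /=.
  have /ssrnat.ltP Hi := ltn_ord i. have [h1 h2] := Hy i Hi. by apply/andP; split; apply/RleP.
have := cmin t tA => /RleP.
have -> : g t = f y.
  apply: cont_ext; first exact: Hc.
  move=> i Hi; rewrite /tf; case: insubP => [u _ Hu|] /=.
    by rewrite mxE Hu; apply: clamp_id; apply: Hy.
  by move/ssrnat.ltP: Hi => ->.
done.
Qed.
End Box.

Definition mv (a : nat -> pt) (c e : nat -> R) (t : R) : nat -> pt :=
  fun j => (fst (a j) + t * c j, snd (a j) + t * e j).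

Definition ddist (a : nat -> pt) (c e : nat -> R) j k :=
  2 * ((fst (a j) - fst (a k)) * (c j - c k) + (snd (a j) - snd (a k)) * (e j - e k)).

Definition Lfun (W : R -> R) n a c e :=
  sumR (n - 1) (fun j => Derive U (dist2 (a (S j)) (a j)) * ddist a c e (S j) j)
  + DS n (fun j k => Derive W (dist2 (a j) (a k)) * ddist a c e j k).

Lemma dist2_mv_derive a c e j k :
  is_derive (fun t => dist2 (mv a c e t j) (mv a c e t k)) 0 (ddist a c e j k).
Proof. unfold dist2, mv, ddist; simpl. auto_derive; auto. ring. Qed.

Lemma dist2_mv0 a c e j k : dist2 (mv a c e 0 j) (mv a c e 0 k) = dist2 (a j) (a k).
Proof. unfold dist2, mv; simpl; ring. Qed.

Lemma term_derive (F : R -> R) a c e j k :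
  ex_derive F (dist2 (a j) (a k)) ->
  is_derive (fun t => F (dist2 (mv a c e t j) (mv a c e t k))) 0
    (Derive F (dist2 (a j) (a k)) * ddist a c e j k).
Proof.
  intros H. rewrite Rmult_comm.
  apply (is_derive_comp F (fun t => dist2 (mv a c e t j) (mv a c e t k))).
  - rewrite dist2_mv0. apply Derive_correct; auto.
  - apply dist2_mv_derive.
Qed.

Lemma U_ex_derive x : 0 < x -> ex_derive U x.
Proof. intros H; unfold U; auto_derive; auto. Qed.

Lemma V_derive (W : R -> R) n a c e :
  (forall j k, (j < n)%nat -> (k < n)%nat -> j <> k -> 0 < dist2 (a j) (a k)) ->
  (forall x, 0 < x -> ex_derive W x) ->
  is_derive (fun t => V W n (mv a c e t)) 0 (Lfun W n a c e).
Proof.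
  intros Hp HW. unfold V, Lfun, DS.
  apply (is_derive_plus (fun t => sumR (n - 1) (fun j => U (dist2 (mv a c e t (S j)) (mv a c e t j))))
     (fun t => sumR n (fun k => sumR k (fun j => W (dist2 (mv a c e t j) (mv a c e t k)))))).
  - apply (sumR_is_derive (n-1) (fun j t => U (dist2 (mv a c e t (S j)) (mv a c e t j)))).
    intros i Hi. apply term_derive. apply U_ex_derive, Hp; lia.
  - apply (sumR_is_derive n (fun k t => sumR k (fun j => W (dist2 (mv a c e t j) (mv a c e t k))))).
    intros k Hk.
    apply (sumR_is_derive k (fun j t => W (dist2 (mv a c e t j) (mv a c e t k)))).
    intros j Hj. apply term_derive. apply HW, Hp; lia.
Qed.

Lemma V_ext_lt W n u v : (forall i, (i < n)%nat -> u i = v i) -> V W n u = V W n v.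
Proof.
  intros H; unfold V; f_equal.
  - apply sumR_ext; intros; rewrite !H by lia; auto.
  - apply sumR_ext; intros k Hk; apply sumR_ext; intros j Hj; rewrite !H by lia; auto.
Qed.

Lemma L_ext W n a c e c' e' : (forall i, (i < n)%nat -> c i = c' i) ->
  (forall i, (i < n)%nat -> e i = e' i) -> Lfun W n a c e = Lfun W n a c' e'.
Proof.
  intros H1 H2; unfold Lfun, DS, ddist; f_equal.
  - apply sumR_ext; intros; rewrite !H1, !H2 by lia; auto.
  - apply sumR_ext; intros k Hk; apply sumR_ext; intros j Hj; rewrite !H1, !H2 by lia; auto.
Qed.

Lemma L_lin W n a k1 k2 c1 c2 e1 e2 :
  Lfun W n a (fun i => k1 * c1 i + k2 * c2 i) (fun i => k1 * e1 i + k2 * e2 i) =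
  k1 * Lfun W n a c1 e1 + k2 * Lfun W n a c2 e2.
Proof.
  unfold Lfun, DS.
  rewrite (sumR_ext (n-1) _ (fun j => k1 * (Derive U (dist2 (a (S j)) (a j)) * ddist a c1 e1 (S j) j)
     + k2 * (Derive U (dist2 (a (S j)) (a j)) * ddist a c2 e2 (S j) j)))
    by (intros; unfold ddist; ring).
  rewrite sumR_lin.
  rewrite (sumR_ext n _ (fun k => k1 * sumR k (fun j => Derive W (dist2 (a j) (a k)) * ddist a c1 e1 j k)
     + k2 * sumR k (fun j => Derive W (dist2 (a j) (a k)) * ddist a c2 e2 j k))).
  { rewrite sumR_lin; ring. }
  intros k Hk. rewrite <- sumR_lin. apply sumR_ext; intros; unfold ddist; ring.
Qed.

Lemma L_collinear W n a c e : (forall i, (i < n)%nat -> snd (a i) = 0) ->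
  (forall i, (i < n)%nat -> c i = 0) -> Lfun W n a c e = 0.
Proof.
  intros H1 H2; unfold Lfun, DS, ddist.
  rewrite sumR_0. rewrite sumR_0. ring.
  - intros k Hk; apply sumR_0; intros j Hj; rewrite !H1, !H2 by lia; ring.
  - intros; rewrite !H1, !H2 by lia; ring.
Qed.

Definition rf (n : nat) (u : nat -> pt) : nat -> pt :=
  fun i => (- fst (u (n - 1 - i)%nat), snd (u (n - 1 - i)%nat)).

Lemma V_rf W n u : V W n (rf n u) = V W n u.
Proof.
  unfold V; f_equal.
  - rewrite (sumR_rev (n-1) (fun j => U (dist2 (u (S j)) (u j)))).
    apply sumR_ext; intros j Hj. f_equal. unfold rf, dist2; simpl.
    replace (n - 1 - S j)%nat with (n - 1 - 1 - j)%nat by lia.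
    replace (n - 1 - j)%nat with (S (n - 1 - 1 - j)) by lia. ring.
  - change (DS n (fun j k => W (dist2 (rf n u j) (rf n u k))) = DS n (fun j k => W (dist2 (u j) (u k)))).
    rewrite (DS_rev n (fun j k => W (dist2 (u j) (u k)))).
    unfold DS. apply sumR_ext; intros k Hk; apply sumR_ext; intros j Hj.
    f_equal. unfold rf, dist2; simpl; ring.
Qed.

Lemma fermat (f : R -> R) l d : is_derive f 0 l -> 0 < d ->
  (forall t, - d < t < d -> f 0 <= f t) -> l = 0.
Proof.
  intros H d0 Hm. apply is_derive_Reals in H.
  pose (pr := exist (fun l => derivable_pt_lim f 0 l) l H : derivable_pt f 0).
  change l with (derive_pt f 0 pr). apply (deriv_minimum f (-d) d 0 pr); try lra.
  intros; apply Hm; lra.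
Qed.

Lemma ex_derive_cont_pt (f : R -> R) x : ex_derive f x -> continuity_pt f x.
Proof. intros H; apply continuity_pt_filterlim; apply (ex_derive_continuous f x H). Qed.

Lemma W_large W : W_hyp W -> forall T, exists eps, 0 < eps /\ forall x, 0 < x < eps -> T < W x.
Proof.
  intros [_ [H _]] T.
  destruct (H (fun y => T < y)) as [eps Heps].
  { exists T; auto. }
  exists eps; split; [apply cond_pos|]. intros x Hx. apply Heps; [|lra].
  change (Rabs (x - 0) < eps). rewrite Rminus_0_r, Rabs_pos_eq; lra.
Qed.

Lemma W_far W : W_hyp W -> exists X, forall x, X < x -> -1 < W x.
Proof.
  intros [_ [_ [_ [H _]]]].
  destruct (H (fun y => -1 < y)) as [X HX].
  { exists (mkposreal 1 Rlt_0_1). intros y Hy. change (Rabs (y - 0) < 1) in Hy.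
    apply Rabs_def2 in Hy. lra. }
  exists X; auto.
Qed.

Lemma W_diff W : W_hyp W -> forall x, 0 < x -> ex_derive W x.
Proof. intros [H _] x Hx. apply (H x Hx). Qed.

Lemma W_lower W : W_hyp W -> exists B, 0 <= B /\ forall x, 0 < x -> - B <= W x.
Proof.
  intros HW.
  destruct (W_large W HW 0) as [e [e0 He]].
  destruct (W_far W HW) as [X HX].
  destruct (continuity_ab_min W (e/2) (Rmax (e/2) X)) as [mx [Hmx Hmx2]].
  { apply Rmax_l. }
  { intros c Hc. apply ex_derive_cont_pt, W_diff; auto; lra. }
  exists (Rmax 1 (- W mx)). split. { apply Rle_trans with 1; [lra|apply Rmax_l]. }
  intros x Hx.
  assert (Rmax 1 (- W mx) >= 1) by (apply Rle_ge, Rmax_l).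
  assert (Rmax 1 (- W mx) >= - W mx) by (apply Rle_ge, Rmax_r).
  destruct (Rlt_dec x e). { assert (0 < W x) by (apply He; lra). lra. }
  destruct (Rlt_dec X x). { assert (-1 < W x) by auto. lra. }
  assert (W mx <= W x). { apply Hmx. split; [lra|]. apply Rle_trans with X; [lra|apply Rmax_r]. }
  lra.
Qed.

Lemma U_ge x : 0 <= x -> -1 <= U x.
Proof.
  intros H. unfold U. pose proof (sqrt_sqrt x H). assert (0 <= (sqrt x - 1) * (sqrt x - 1)) by apply Rle_0_sqr. nra.
Qed.

Lemma U_sq D : 3 <= D -> D <= U (D ^ 2).
Proof.
  intros H. unfold U. rewrite <- Rsqr_pow2, sqrt_Rsqr by lra. unfold Rsqr; nra.
Qed.

Lemma U_cont x : 0 < x -> continuity_pt U x.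
Proof. intros; apply ex_derive_cont_pt. unfold U; auto_derive; auto. Qed.

Lemma cont_pt_eps (h : R -> R) z : continuity_pt h z ->
  forall eps, 0 < eps -> exists d, 0 < d /\ forall w, Rabs (w - z) < d -> Rabs (h w - h z) < eps.
Proof.
  intros H eps He. destruct (H eps He) as [d [d0 Hd]]. exists d; split; auto.
  intros w Hw. destruct (Req_dec w z).
  - subst. rewrite Rminus_diag, Rabs_R0; auto.
  - apply (Hd w). split; [split; [exact I|congruence]|exact Hw].
Qed.

Lemma cont_const m c x : cont m (fun _ => c) x.
Proof. intros e He; exists 1; split; [lra|]. intros; rewrite Rminus_diag, Rabs_R0; auto. Qed.

Lemma cont_coord m i x : (i < m)%nat -> cont m (fun y => y i) x.
Proof. intros Hi e He; exists e; split; auto. Qed.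

Lemma cont_plus m f g x : cont m f x -> cont m g x -> cont m (fun y => f y + g y) x.
Proof.
  intros Hf Hg e He.
  destruct (Hf (e/2)) as [d1 [d10 H1]]; [lra|].
  destruct (Hg (e/2)) as [d2 [d20 H2]]; [lra|].
  exists (Rmin d1 d2); split; [apply Rmin_pos; auto|].
  intros y Hy.
  assert (A1 : Rabs (f y - f x) < e/2) by (apply H1; intros i Hi; specialize (Hy i Hi); pose proof (Rmin_l d1 d2); lra).
  assert (A2 : Rabs (g y - g x) < e/2) by (apply H2; intros i Hi; specialize (Hy i Hi); pose proof (Rmin_r d1 d2); lra).
  replace (f y + g y - (f x + g x)) with ((f y - f x) + (g y - g x)) by ring.
  pose proof (Rabs_triang (f y - f x) (g y - g x)). lra.
Qed.

Lemma cont_comp m (h : R -> R) f x : continuity_pt h (f x) -> cont m f x -> cont m (fun y => h (f y)) x.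
Proof.
  intros Hh Hf e He. destruct (cont_pt_eps h (f x) Hh e He) as [d [d0 Hd]].
  destruct (Hf d d0) as [d' [d'0 H']]. exists d'; split; auto.
Qed.

Lemma cont_opp m f x : cont m f x -> cont m (fun y => - f y) x.
Proof. intros H. apply (cont_comp m Ropp f x); auto. apply continuity_pt_opp, continuity_pt_id. Qed.

Lemma cont_minus m f g x : cont m f x -> cont m g x -> cont m (fun y => f y - g y) x.
Proof. intros; apply cont_plus; auto; apply cont_opp; auto. Qed.

Lemma cont_sq m f x : cont m f x -> cont m (fun y => f y ^ 2) x.
Proof. intros H. apply (cont_comp m (fun z => z ^ 2) f x); auto.
  apply ex_derive_cont_pt. auto_derive; auto.
Qed.

Lemma cont_sumR m N (F : nat -> (nat -> R) -> R) x :
  (forall k, (k < N)%nat -> cont m (F k) x) -> cont m (fun y => sumR N (fun k => F k y)) x.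
Proof.
  induction N; intros H; simpl.
  - apply cont_const.
  - apply (cont_plus m (fun y => sumR N (fun k => F k y)) (F N)).
    apply IHN; intros; apply H; lia. apply H; lia.
Qed.

Definition ppos (n : nat) (g : nat -> R) (j : nat) : R :=
  if (n - Nat.div2 n <=? j)%nat then sumR (S (j - (n - Nat.div2 n))) g
  else if (j <? Nat.div2 n)%nat then - sumR (S (Nat.div2 n - 1 - j)) g else 0.

Definition indic (i : nat) : nat -> R := fun k => if Nat.eqb k i then 1 else 0.

Lemma m_spec n : n = (2 * Nat.div2 n)%nat \/ n = S (2 * Nat.div2 n).
Proof. pose proof (Nat.div2_odd n). destruct (Nat.odd n); simpl in H; lia. Qed.

Ltac cases := repeat match goal with
  | |- context [Nat.leb ?a ?b] => destruct (Nat.leb_spec a b)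
  | |- context [Nat.ltb ?a ?b] => destruct (Nat.ltb_spec a b)
  | |- context [Nat.eqb ?a ?b] => destruct (Nat.eqb_spec a b) end.

Lemma pos_lin n g e t j : ppos n (fun i => g i + t * e i) j = ppos n g j + t * ppos n e j.
Proof.
  unfold ppos. cases;
  try (rewrite (sumR_ext _ (fun i => g i + t * e i) (fun i => 1 * g i + t * e i)) by (intros; ring);
       rewrite sumR_lin); ring.
Qed.

Lemma pos_sym n g j : (j < n)%nat -> ppos n g (n - 1 - j) = - ppos n g j.
Proof.
  intros Hj. pose proof (m_spec n). set (m := Nat.div2 n) in *. unfold ppos. fold m. cases; try lia.
  all: try (replace (S (m - 1 - (n - 1 - j))) with (S (j - (n - m))) by lia);
    try (replace (S (n - 1 - j - (n - m))) with (S (m - 1 - j)) by lia); ring.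
Qed.

Lemma sumR_pos N g : (forall i, (i < N)%nat -> 0 < g i) -> (0 < N)%nat -> 0 < sumR N g.
Proof.
  induction N; intros H HN; [lia|]. simpl.
  destruct N. { simpl. assert (0 < g 0%nat) by (apply H; lia). lra. }
  assert (0 < sumR (S N) g) by (apply IHN; [intros; apply H|]; lia).
  assert (0 < g (S N)) by (apply H; lia). lra.
Qed.

Lemma sumR_S N g : sumR (S N) g = sumR N g + g N.
Proof. reflexivity. Qed.

Lemma pos_incr n g j : (2 <= n)%nat -> (forall i, (i < Nat.div2 n)%nat -> 0 < g i) ->
  (S j < n)%nat -> ppos n g j < ppos n g (S j).
Proof.
  intros Hn Hg Hj. pose proof (m_spec n). set (m := Nat.div2 n) in *. unfold ppos. fold m. cases; try lia.
  - replace (S j - (n - m))%nat with (S (j - (n - m))) by lia. rewrite (sumR_S (S (j - (n - m)))).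
    assert (0 < g (S (j - (n - m)))) by (apply Hg; lia). lra.
  - assert (0 < sumR (S (S j - (n - m))) g) by (apply sumR_pos; [intros; apply Hg|]; lia).
    assert (0 < sumR (S (m - 1 - j)) g) by (apply sumR_pos; [intros; apply Hg|]; lia). lra.
  - assert (0 < sumR (S (S j - (n - m))) g) by (apply sumR_pos; [intros; apply Hg|]; lia). lra.
  - replace (m - 1 - j)%nat with (S (m - 1 - S j)) by lia. rewrite (sumR_S (S (m - 1 - S j))).
    assert (0 < g (S (m - 1 - S j))) by (apply Hg; lia). lra.
  - assert (0 < sumR (S (m - 1 - j)) g) by (apply sumR_pos; [intros; apply Hg|]; lia). lra.
Qed.

Lemma pos_incr_lt n g j k : (2 <= n)%nat -> (forall i, (i < Nat.div2 n)%nat -> 0 < g i) ->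
  (j < k)%nat -> (k < n)%nat -> ppos n g j < ppos n g k.
Proof.
  intros Hn Hg. induction k; intros Hjk Hk; [lia|].
  destruct (Nat.eq_dec j k).
  - subst; apply pos_incr; auto.
  - apply Rlt_trans with (ppos n g k); [apply IHk; lia| apply pos_incr; auto].
Qed.

Lemma pos_gap n g i : (2 <= n)%nat -> (forall i, (i < Nat.div2 n)%nat -> 0 < g i) ->
  (i < Nat.div2 n)%nat -> exists jj, (S jj < n)%nat /\
  g i <= ppos n g (S jj) - ppos n g jj <= 2 * g i.
Proof.
  intros Hn Hg Hi. pose proof (m_spec n). set (m := Nat.div2 n) in *.
  assert (Hgi := Hg i Hi).
  exists (n - m + i - 1)%nat. split; [lia|].
  replace (S (n - m + i - 1)) with (n - m + i)%nat by lia.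
  unfold ppos; fold m. cases; try lia.
  - replace (S (n - m + i - (n - m))) with (S (S (n - m + i - 1 - (n - m)))) by lia.
    replace (S (n - m + i - 1 - (n - m))) with i by lia. rewrite (sumR_S i). lra.
  - replace (S (n - m + i - (n - m))) with 1%nat by lia.
    replace (S (m - 1 - (n - m + i - 1))) with 1%nat by lia.
    assert (i = 0%nat) by lia; subst i. simpl. lra.
  - replace (S (n - m + i - (n - m))) with 1%nat by lia.
    assert (i = 0%nat) by lia; subst i. simpl. lra.
Qed.

Lemma sumR_ind N i : sumR N (indic i) = if (i <? N)%nat then 1 else 0.
Proof.
  induction N; simpl. { cases; lia || ring. }
  rewrite IHN. unfold indic. cases; try lia; ring.
Qed.

Lemma pos_ind_diff n i j : (i < Nat.div2 n)%nat -> (j < n)%nat ->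
  ppos n (indic i) j - ppos n (indic (S i)) j = indic (n - Nat.div2 n + i) j - indic (Nat.div2 n - 1 - i) j.
Proof.
  intros Hi Hj. pose proof (m_spec n). set (m := Nat.div2 n) in *. unfold ppos; fold m.
  rewrite !sumR_ind. unfold indic. cases; try lia; ring.
Qed.

Lemma pos_ind_m n j : (j < n)%nat -> ppos n (indic (Nat.div2 n)) j = 0.
Proof.
  intros Hj. pose proof (m_spec n). set (m := Nat.div2 n) in *. unfold ppos; fold m.
  rewrite !sumR_ind. cases; try lia; ring.
Qed.

Definition config (n : nat) (g : nat -> R) : nat -> pt := fun j => (ppos n g j, 0).

Lemma cont_pos n x j : (j < n)%nat -> cont (Nat.div2 n) (fun g => ppos n g j) x.
Proof.
  intros Hj. pose proof (m_spec n). unfold ppos.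
  destruct (Nat.leb_spec (n - Nat.div2 n) j).
  - apply cont_sumR; intros k Hk; apply cont_coord; lia.
  - destruct (Nat.ltb_spec j (Nat.div2 n)).
    + apply cont_opp. apply cont_sumR; intros k Hk; apply cont_coord; lia.
    + apply cont_const.
Qed.

Lemma cont_d2 n x a b : (a < n)%nat -> (b < n)%nat ->
  cont (Nat.div2 n) (fun g => dist2 (config n g a) (config n g b)) x.
Proof.
  intros Ha Hb. unfold dist2, config; simpl.
  apply (cont_plus _ (fun g => (ppos n g a - ppos n g b) ^ 2) (fun g => (0 - 0) ^ 2)).
  - apply cont_sq. apply cont_minus; apply cont_pos; auto.
  - apply cont_const.
Qed.

Lemma d2_config_pos n g j k : (2 <= n)%nat -> (forall i, (i < Nat.div2 n)%nat -> 0 < g i) ->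
  (j < n)%nat -> (k < n)%nat -> j <> k -> 0 < dist2 (config n g j) (config n g k).
Proof.
  intros Hn Hg Hj Hk Hjk. unfold dist2, config; simpl.
  assert (ppos n g j <> ppos n g k).
  { destruct (Nat.lt_total j k) as [H|[H|H]]; try lia.
    - pose proof (pos_incr_lt n g j k Hn Hg H Hk); lra.
    - pose proof (pos_incr_lt n g k j Hn Hg H Hj); lra. }
  assert (ppos n g j - ppos n g k <> 0) by lra.
  assert (0 < (ppos n g j - ppos n g k) ^ 2) by (rewrite <- Rsqr_pow2; apply Rsqr_pos_lt; auto).
  nra.
Qed.

Lemma cont_obj W n x : W_hyp W -> (2 <= n)%nat -> (forall i, (i < Nat.div2 n)%nat -> 0 < x i) ->
  cont (Nat.div2 n) (fun g => V W n (config n g)) x.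
Proof.
  intros HW Hn Hx. unfold V.
  apply (cont_plus _ (fun g => sumR (n-1) (fun j => U (dist2 (config n g (S j)) (config n g j))))
     (fun g => sumR n (fun k => sumR k (fun j => W (dist2 (config n g j) (config n g k)))))).
  - apply (cont_sumR _ (n-1) (fun j g => U (dist2 (config n g (S j)) (config n g j)))).
    intros k Hk. apply (cont_comp _ U (fun g => dist2 (config n g (S k)) (config n g k))).
    + apply U_cont, d2_config_pos; auto; lia.
    + apply cont_d2; lia.
  - apply (cont_sumR _ n (fun k g => sumR k (fun j => W (dist2 (config n g j) (config n g k))))).
    intros k Hk. apply (cont_sumR _ k (fun j g => W (dist2 (config n g j) (config n g k)))).
    intros j Hj. apply (cont_comp _ W (fun g => dist2 (config n g j) (config n g k))).
    + apply ex_derive_cont_pt, W_diff, d2_config_pos; auto; lia.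
    + apply cont_d2; lia.
Qed.

Definition Kc (n : nat) (B : R) := INR n + INR n * B + INR n * (INR n * B).

Lemma dist2_ge0 p q : 0 <= dist2 p q.
Proof. unfold dist2. pose proof (pow2_ge_0 (fst p - fst q)). pose proof (pow2_ge_0 (snd p - snd q)). lra. Qed.

Lemma V_lb W n u B : 0 <= B -> (forall x, 0 < x -> - B <= W x) ->
  (forall j k, (j < n)%nat -> (k < n)%nat -> j <> k -> 0 < dist2 (u j) (u k)) ->
  (forall j0, (S j0 < n)%nat -> U (dist2 (u (S j0)) (u j0)) - Kc n B <= V W n u) /\
  (forall jj, (S jj < n)%nat -> W (dist2 (u jj) (u (S jj))) - Kc n B <= V W n u).
Proof.
  intros B0 HB Hd.
  assert (Hn1 : forall k, (k <= n)%nat -> INR k <= INR n) by (intros; apply le_INR; auto).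
  assert (HU : forall j, -1 <= U (dist2 (u (S j)) (u j))) by (intros; apply U_ge, dist2_ge0).
  assert (inner : forall k, (k < n)%nat -> - (INR n * B) <= sumR k (fun j => W (dist2 (u j) (u k)))).
  { intros k Hk. eapply Rle_trans; [|apply (sumR_ge k _ B)].
    - assert (INR k * B <= INR n * B) by (apply Rmult_le_compat_r; auto; apply Hn1; lia). lra.
    - intros j Hj. apply HB, Hd; lia. }
  assert (dge : - INR n * (INR n * B) <= sumR n (fun k => sumR k (fun j => W (dist2 (u j) (u k))))).
  { apply sumR_ge. intros; apply inner; lia. }
  assert (cge : - INR n <= sumR (n - 1) (fun j => U (dist2 (u (S j)) (u j)))).
  { assert (INR (n-1) <= INR n) by (apply Hn1; lia).
    eapply Rle_trans; [|apply (sumR_ge _ _ 1)]; [lra| intros; auto]. }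
  assert (INR n * B >= 0) by (apply Rle_ge, Rmult_le_pos; auto; apply pos_INR).
  assert (INR n * (INR n * B) >= 0) by (apply Rle_ge, Rmult_le_pos; [apply pos_INR|lra]).
  unfold V, Kc; split.
  - intros j0 Hj0.
    assert (U (dist2 (u (S j0)) (u j0)) - INR (n - 1) * 1 <= sumR (n - 1) (fun j => U (dist2 (u (S j)) (u j)))).
    { apply (sumR_ge_one (n-1) _ 1 j0); auto; try lra; try lia. }
    assert (INR (n-1) <= INR n) by (apply Hn1; lia). lra.
  - intros jj Hjj.
    assert (A : W (dist2 (u jj) (u (S jj))) - INR (S jj) * B <= sumR (S jj) (fun j => W (dist2 (u j) (u (S jj))))).
    { apply (sumR_ge_one (S jj) _ B jj); auto; try lra; try lia. intros; apply HB, Hd; lia. }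
    assert (INR (S jj) * B <= INR n * B) by (apply Rmult_le_compat_r; auto; apply Hn1; lia).
    assert (W (dist2 (u jj) (u (S jj))) - INR n * B - INR n * (INR n * B) <=
            sumR n (fun k => sumR k (fun j => W (dist2 (u j) (u k))))).
    { apply (sumR_ge_one n _ (INR n * B) (S jj)); [lia|lra|lra|intros; apply inner; lia]. }
    lra.
Qed.

Lemma deriv_uniq (f : R -> R) x l1 l2 : is_derive f x l1 -> is_derive f x l2 -> l1 = l2.
Proof. intros H1 H2. rewrite <- (is_derive_unique f x l1 H1), <- (is_derive_unique f x l2 H2). reflexivity. Qed.

Definition Dj W n xs j := Lfun W n (config n xs) (indic j) (fun _ => 0).

Lemma E3 W n xs j : W_hyp W -> (2 <= n)%nat -> (forall i, (i < Nat.div2 n)%nat -> 0 < xs i) ->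
  (j < n)%nat -> Dj W n xs (n - 1 - j) = - Dj W n xs j.
Proof.
  intros HW Hn Hx Hj. unfold Dj. set (a := config n xs).
  assert (Hd : forall j k, (j < n)%nat -> (k < n)%nat -> j <> k -> 0 < dist2 (a j) (a k))
    by (intros; apply d2_config_pos; auto).
  pose proof (V_derive W n a (indic j) (fun _ => 0) Hd (W_diff W HW)) as H1.
  pose proof (V_derive W n a (fun k => -1 * indic (n-1-j) k + 0 * indic (n-1-j) k)
     (fun k => -1 * 0 + 0 * 0) Hd (W_diff W HW)) as H2.
  rewrite L_lin in H2.
  assert (eqf : forall t, V W n (mv a (fun k => -1 * indic (n-1-j) k + 0 * indic (n-1-j) k)
     (fun k => -1 * 0 + 0 * 0) t) = V W n (mv a (indic j) (fun _ => 0) t)).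
  { intros t. rewrite <- (V_rf W n (mv a (indic j) (fun _ => 0) t)). apply V_ext_lt.
    intros k Hk. unfold rf, mv, a, config; simpl. rewrite pos_sym by lia.
    replace (indic j (n - 1 - k)%nat) with (indic (n - 1 - j) k).
    - f_equal; ring.
    - unfold indic. cases; try lia; reflexivity. }
  apply (is_derive_ext _ _ _ _ eqf) in H2.
  pose proof (deriv_uniq _ _ _ _ H1 H2) as H3. rewrite H3. ring.
Qed.

Lemma key W n xs : W_hyp W -> (2 <= n)%nat -> (forall i, (i < Nat.div2 n)%nat -> 0 < xs i) ->
  (forall i, (i < Nat.div2 n)%nat -> Lfun W n (config n xs) (ppos n (indic i)) (fun _ => 0) = 0) ->
  forall j, (j < n)%nat -> Dj W n xs j = 0.
Proof.
  intros HW Hn Hx E1.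
  pose proof (m_spec n). set (m := Nat.div2 n) in *. set (a := config n xs).
  assert (E1' : forall i, (i <= m)%nat -> Lfun W n a (ppos n (indic i)) (fun _ => 0) = 0).
  { intros i Hi. destruct (Nat.eq_dec i m).
    - subst i. transitivity (Lfun W n a (fun _ => 0) (fun _ => 0)).
      + apply L_ext; [intros; apply pos_ind_m; auto | auto].
      + apply L_collinear; auto.
    - apply E1; lia. }
  assert (E2 : forall i, (i < m)%nat -> Dj W n xs (n - m + i) - Dj W n xs (m - 1 - i) = 0).
  { intros i Hi.
    replace (Dj W n xs (n - m + i) - Dj W n xs (m - 1 - i)) with
      (Lfun W n a (fun k => 1 * indic (n - m + i) k + -1 * indic (m - 1 - i) k) (fun k => 1 * 0 + -1 * 0))
      by (rewrite L_lin; unfold Dj; fold a; ring).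
    rewrite (L_ext W n a (fun k => 1 * indic (n - m + i) k + -1 * indic (m - 1 - i) k) (fun k => 1 * 0 + -1 * 0) (fun k => 1 * ppos n (indic i) k + -1 * ppos n (indic (S i)) k) (fun k => 1 * 0 + -1 * 0)).
    - rewrite L_lin, !E1' by lia. ring.
    - intros k Hk. pose proof (pos_ind_diff n i k Hi Hk). fold m in H0. lra.
    - auto. }
  intros j Hj.
  destruct (Nat.leb_spec (n - m) j).
  - pose proof (E2 (j - (n - m))%nat ltac:(lia)).
    replace (n - m + (j - (n - m)))%nat with j in H1 by lia.
    replace (m - 1 - (j - (n - m)))%nat with (n - 1 - j)%nat in H1 by lia.
    rewrite E3 in H1; auto. lra.
  - destruct (Nat.ltb_spec j m).
    + pose proof (E2 (m - 1 - j)%nat ltac:(lia)).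
      replace (n - m + (m - 1 - j))%nat with (n - 1 - j)%nat in H2 by lia.
      replace (m - 1 - (m - 1 - j))%nat with j in H2 by lia.
      rewrite E3 in H2; auto. lra.
    + pose proof (E3 W n xs j HW Hn Hx Hj).
      replace (n - 1 - j)%nat with j in H2 by lia. lra.
Qed.

Theorem corollary1 (W : R -> R) (n : nat) :
  W_hyp W -> (2 <= n)%nat ->
  exists (a : nat -> pt) (p : nat -> R),
    in_Omega n a /\
    critical_point W n a /\
    (forall j : nat, (j < n)%nat -> a j = (p j, 0)) /\
    (forall j : nat, (S j < n)%nat -> p j < p (S j)) /\
    (forall j : nat, (j < n)%nat -> p (n - 1 - j)%nat = - p j).
Proof.
  intros HW Hn.
  destruct (W_lower W HW) as [B [B0 HB]].
  pose (K := Kc n B).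
  pose (V0 := V W n (config n (fun _ => 1))).
  destruct (W_large W HW (V0 + K + 1)) as [eps [eps0 Heps]].
  pose (dl := Rmin 1 (eps / 4)). pose (M := Rmax 3 (V0 + K + 1)).
  assert (dl0 : 0 < dl) by (apply Rmin_pos; lra).
  assert (dl1 : dl <= 1) by apply Rmin_l.
  assert (dl2 : dl <= eps / 4) by apply Rmin_r.
  assert (M3 : 3 <= M) by apply Rmax_l.
  assert (MT : V0 + K + 1 <= M) by apply Rmax_r.
  assert (Out : forall y, (forall i, (i < Nat.div2 n)%nat -> 0 < y i) ->
     (exists i, (i < Nat.div2 n)%nat /\ (y i < dl \/ M < y i)) -> V0 < V W n (config n y)).
  { intros y Hy [i [Hi Hc]].
    destruct (V_lb W n (config n y) B B0 HB) as [LB1 LB2].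
    { intros; apply d2_config_pos; auto. }
    destruct (pos_gap n y i Hn Hy Hi) as [jj [Hjj Hg]].
    assert (HD2 : dist2 (config n y jj) (config n y (S jj)) = (ppos n y (S jj) - ppos n y jj) ^ 2)
      by (unfold dist2, config; simpl; ring).
    assert (HD2' : dist2 (config n y (S jj)) (config n y jj) = (ppos n y (S jj) - ppos n y jj) ^ 2)
      by (unfold dist2, config; simpl; ring).
    pose proof (Hy i Hi).
    destruct Hc as [Hc|Hc].
    - specialize (LB2 jj Hjj). rewrite HD2 in LB2.
      set (D := ppos n y (S jj) - ppos n y jj) in *.
      assert (V0 + K + 1 < W (D ^ 2)).
      { apply Heps. split.
        - assert (0 < D) by lra. apply pow_lt; auto.
        - assert (D * D <= (2 * y i) * (2 * y i)) by (apply Rmult_le_compat; lra).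
          assert (y i * y i < dl * dl) by (apply Rmult_le_0_lt_compat; lra).
          assert (dl * dl <= dl * 1) by (apply Rmult_le_compat_l; lra).
          simpl. lra. }
      unfold K in *. lra.
    - specialize (LB1 jj Hjj). rewrite HD2' in LB1.
      set (D := ppos n y (S jj) - ppos n y jj) in *.
      assert (D <= U (D ^ 2)) by (apply U_sq; lra).
      unfold K in *. lra. }
  destruct (Box.box_min (Nat.div2 n) dl M (fun g => V W n (config n g))) as [xs [Hin Hmin]].
  { lra. }
  { intros x Hx; apply cont_obj; auto. intros i Hi; specialize (Hx i Hi); lra. }
  assert (Hx : forall i, (i < Nat.div2 n)%nat -> 0 < xs i) by (intros i Hi; specialize (Hin i Hi); lra).
  assert (Hglob : forall y, (forall i, (i < Nat.div2 n)%nat -> 0 < y i) ->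
     V W n (config n xs) <= V W n (config n y)).
  { intros y Hy. destruct (classic (forall i, (i < Nat.div2 n)%nat -> dl <= y i <= M)) as [Hb|Hb].
    - apply Hmin; auto.
    - apply Rle_trans with V0.
      + apply Hmin. intros; lra.
      + apply Rlt_le, Out; auto.
        apply not_all_ex_not in Hb. destruct Hb as [i Hi]. apply imply_to_and in Hi.
        destruct Hi as [Hi1 Hi2]. exists i; split; auto.
        destruct (Rlt_dec (y i) dl); [left; auto|]. right.
        destruct (Rlt_dec M (y i)); auto. exfalso; apply Hi2; lra. }
  assert (Hd : forall j k, (j < n)%nat -> (k < n)%nat -> j <> k ->
     0 < dist2 (config n xs j) (config n xs k)) by (intros; apply d2_config_pos; auto).
  assert (E1 : forall i, (i < Nat.div2 n)%nat ->
     Lfun W n (config n xs) (ppos n (indic i)) (fun _ => 0) = 0).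
  { intros i Hi.
    pose proof (V_derive W n (config n xs) (ppos n (indic i)) (fun _ => 0) Hd (W_diff W HW)) as H1.
    assert (Hmv : forall t, mv (config n xs) (ppos n (indic i)) (fun _ => 0) t =
        config n (fun k => xs k + t * indic i k)).
    { intros t. extensionality k. unfold mv, config; simpl. rewrite pos_lin. f_equal; ring. }
    apply (fermat _ _ dl H1 dl0). intros t Ht.
    rewrite !Hmv.
    replace (fun k => xs k + 0 * indic i k) with xs by (extensionality k; ring).
    apply Hglob. intros k Hk. specialize (Hin k Hk). unfold indic.
    destruct (Nat.eqb k i); lra. }
  pose proof (key W n xs HW Hn Hx E1) as HK.
  exists (config n xs), (ppos n xs). split; [|split; [|split; [|split]]].
  - intros j k Hj Hk Hjk Heq. pose proof (Hd j k Hj Hk Hjk) as H.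
    rewrite Heq in H. unfold dist2 in H. replace (fst (config n xs k) - fst (config n xs k)) with 0 in H by ring.
    replace (snd (config n xs k) - snd (config n xs k)) with 0 in H by ring. simpl in H. lra.
  - intros j Hj. split.
    + pose proof (V_derive W n (config n xs) (indic j) (fun _ => 0) Hd (W_diff W HW)) as H.
      pose proof (HK j Hj) as Hv. unfold Dj in Hv. rewrite Hv in H.
      apply (is_derive_ext (fun t => V W n (mv (config n xs) (indic j) (fun _ => 0) t))); auto.
      intros t. apply V_ext_lt. intros k Hk. unfold mv, upd, indic; cbv beta.
      destruct (Nat.eqb_spec k j); subst; apply injective_projections; simpl; ring.
    + pose proof (V_derive W n (config n xs) (fun _ => 0) (indic j) Hd (W_diff W HW)) as H.
      rewrite L_collinear in H; auto.
      apply (is_derive_ext (fun t => V W n (mv (config n xs) (fun _ => 0) (indic j) t))); auto.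
      intros t. apply V_ext_lt. intros k Hk. unfold mv, upd, indic; cbv beta.
      destruct (Nat.eqb_spec k j); subst; apply injective_projections; simpl; ring.
  - intros; reflexivity.
  - intros j Hj. apply pos_incr; auto.
  - intros j Hj. apply pos_sym; auto.
Qed.
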